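(* Let $q\ge2$ and let $(p_1,\dots,p_q)$ and $(f_1,\dots,f_q)$ be vectors of positive reals, each summing to $1$, satisfying $f_1p_1\ge f_2p_2\ge\dots\ge f_qp_q$. Let $1\le z<q$ be an integer and $w=\lfloor z/2\rfloor+1$. Then: (1) if $z$ is even, $\frac{3z+2}{2}f_wp_w+(2z+1)\sum_{j=w+1}^q f_jp_j\le1$; (2) if $z$ is odd, $\frac{z+1}{2}f_wp_w+(2z+1)\sum_{j=w+1}^q f_jp_j\le 1$. *)

(* Defs.v *)
From HB Require Import structures.
From mathcomp Require Import all_boot all_order all_algebra.
Set Implicit Arguments. Unset Strict Implicit. Unset Printing Implicit Defensive.

(* Main.v *)
Require Import Defs.
From HB Require Import structures.
From mathcomp Require Import all_boot all_order all_algebra.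
Import Order.TTheory GRing.Theory Num.Theory.
From mathcomp Require Import zify ring lra.
Local Open Scope ring_scope.

Section Aux.
Variable R : realFieldType.
Set Implicit Arguments.

Lemma mono_a (q : nat) (a : nat -> R) :
  (forall i, (1 <= i < q)%N -> a i.+1 <= a i) ->
  forall i j, (1 <= i)%N -> (i <= j)%N -> (j <= q)%N -> a j <= a i.
Proof.
move=> H i; elim=> [|j IH] h1 h2 h3; first by lia.
case: (leqP i j) => hij.
- apply: le_trans (IH h1 hij _); last by lia.
  apply: H; lia.
- have -> : j.+1 = i by lia. by [].
Qed.

Lemma amgm (s t m : R) : 0 <= s -> 0 <= t -> 0 <= m -> m * m <= s * t ->
  2 * m <= s + t.
Proof.
move=> hs ht hm hst; rewrite leNgt; apply/negP => h.
have h1 : 0 < 2 * m - (s + t) by lra.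
have h2 : 0 <= 2 * m + (s + t) by lra.
have := mulr_ge0 (ltW h1) h2. have := sqr_ge0 (s - t). nra.
Qed.

Lemma lemA (q : nat) (p f : nat -> R) :
  (forall i, (1 <= i <= q)%N -> 0 < p i) ->
  (forall i, (1 <= i <= q)%N -> 0 < f i) ->
  (forall i, (1 <= i < q)%N -> f i.+1 * p i.+1 <= f i * p i) ->
  forall N, (N <= q)%N ->
  \sum_(1 <= j < N.+1) ((2 * j)%:R - 1) * (f j * p j) <=
  (\sum_(1 <= i < N.+1) f i) * (\sum_(1 <= i < N.+1) p i).
Proof.
move=> hp hf hm; elim=> [|N IH] hN.
  by rewrite !big_geq // mulr0.
rewrite !(big_nat_recr N.+1) //=.
have IH' := IH (ltnW hN).
set F := \sum_(1 <= i < N.+1) f i.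
set P := \sum_(1 <= i < N.+1) p i.
have key : (2 * N)%:R * (f N.+1 * p N.+1) <= f N.+1 * P + F * p N.+1.
  rewrite /F /P mulr_sumr mulr_suml -big_split /=.
  have -> : (2 * N)%:R * (f N.+1 * p N.+1) =
            \sum_(1 <= i < N.+1) (2 * (f N.+1 * p N.+1)).
    by rewrite sumr_const_nat subn1 /= natrM -mulr_natr; ring.
  apply: ler_sum_nat => i /andP [hi1 hi2].
  have hfi := hf i ltac:(lia). have hpi := hp i ltac:(lia).
  have hfN := hf N.+1 ltac:(lia). have hpN := hp N.+1 ltac:(lia).
  have hle := @mono_a _ _ hm i N.+1 ltac:(lia) ltac:(lia) ltac:(lia).
  apply: amgm; try nra.
  have -> : f N.+1 * p i * (f i * p N.+1) = (f i * p i) * (f N.+1 * p N.+1) by ring.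
  apply: ler_wpM2r => //; nra.
have -> : ((2 * N.+1)%:R - 1) * (f N.+1 * p N.+1) = (2 * N)%:R * (f N.+1 * p N.+1) + f N.+1 * p N.+1.
  rewrite mulnS !natrD; ring.
move: IH'; rewrite -/F -/P => IH'.
rewrite mulrDl !mulrDr; lra.
Qed.

Lemma lemBase (q w : nat) (a : nat -> R) :
  (forall i, (1 <= i < q)%N -> a i.+1 <= a i) -> (1 <= w <= q)%N ->
  forall N, (N <= w)%N ->
  (N ^ 2)%:R * a w <= \sum_(1 <= j < N.+1) ((2 * j)%:R - 1) * a j.
Proof.
move=> hm hw; elim=> [|N IH] hN.
  by rewrite big_geq // mul0r.
rewrite (big_nat_recr N.+1) //=.
have := IH (ltnW hN).
have hle := @mono_a _ _ hm N.+1 w ltac:(lia) ltac:(lia) ltac:(lia).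
have e : (N.+1 ^ 2)%:R = (N ^ 2)%:R + (2 * N.+1)%:R - 1 :> R.
  have E : (N.+1 ^ 2 + 1 = N ^ 2 + 2 * N.+1)%N by nia.
  have := congr1 (fun n => n%:R : R) E; rewrite !natrD /= => E'; lra.
have h1 : 1 <= (2 * N.+1)%:R :> R by rewrite ler1n; lia.
rewrite e; nra.
Qed.

Lemma lemB (q w c d : nat) (a : nat -> R) :
  (forall i, (1 <= i < q)%N -> a i.+1 <= a i) -> (1 <= w <= q)%N ->
  (forall m, c + d * m <= (w + m) ^ 2)%N ->
  forall m, (w + m <= q)%N ->
  ((w + m) ^ 2 - (c + d * m))%:R * a (w + m) <=
  \sum_(1 <= j < (w + m).+1) ((2 * j)%:R - 1) * a j - c%:R * a w
  - d%:R * \sum_(w.+1 <= j < (w + m).+1) a j.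
Proof.
move=> hm hw H; elim=> [|m IH] hmq.
  rewrite !addn0 muln0 addn0 (big_geq (m:=w.+1)) // mulr0 subr0 natrB; last first.
    by have := H 0%N; rewrite muln0 !addn0.
  have := @lemBase q w a hm hw w (leqnn w). have e0 : a (w + 0%N) = a w by congr a; lia.
  rewrite mulrBl e0; lra.
have IH' := IH ltac:(lia).
rewrite addnS !(big_nat_recr (w + m).+1) //=; last by lia.
have hle := @mono_a _ _ hm (w + m)%N (w + m).+1 ltac:(lia) ltac:(lia) ltac:(lia).
set G := ((w + m) ^ 2 - (c + d * m))%N in IH'.
set G' := ((w + m).+1 ^ 2 - (c + d * m.+1))%N.
have E : (G' + d + 1 = G + 2 * (w + m).+1)%N.
  have := H m; have := H m.+1; rewrite addnS /G /G'; nia.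
have := congr1 (fun n => n%:R : R) E; rewrite !natrD /= => E'.
have hG : 0 <= G%:R :> R by [].
move: IH'; set S1 := \sum_(1 <= j < (w + m).+1) _.
set S2 := \sum_(w.+1 <= j < (w + m).+1) _.
have e1 : a (w + m.+1)%N = a (w + m).+1 by congr a; lia.
have eG : G'%:R = G%:R + (2 * (w + m).+1)%:R - 1 - d%:R :> R by lra.
rewrite e1 eG.
have := mulr_ge0 hG (ltac:(by rewrite subr_ge0) : 0 <= a (w + m)%N - a (w + m).+1). nra.
Qed.

End Aux.

Theorem proposition5p5 (R : realFieldType) (q : nat) (p f : nat -> R) (z : nat) :
  (2 <= q)%N ->
  (forall i, (1 <= i <= q)%N -> 0 < p i) ->
  (forall i, (1 <= i <= q)%N -> 0 < f i) ->
  \sum_(1 <= i < q.+1) p i = 1 ->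
  \sum_(1 <= i < q.+1) f i = 1 ->
  (forall i, (1 <= i < q)%N -> f i.+1 * p i.+1 <= f i * p i) ->
  (1 <= z < q)%N ->
  let w := (z %/ 2).+1 in
  (~~ odd z ->
     (3 * z + 2)%:R / 2 * (f w * p w)
     + (2 * z + 1)%:R * \sum_(w.+1 <= j < q.+1) f j * p j <= 1) /\
  (odd z ->
     (z + 1)%:R / 2 * (f w * p w)
     + (2 * z + 1)%:R * \sum_(w.+1 <= j < q.+1) f j * p j <= 1).
Proof.
move=> hq hp hf sp sf hm hz w.
set a := fun j => f j * p j.
have hA := @lemA R q p f hp hf hm q (leqnn q).
rewrite sp sf mulr1 in hA.
have hw : (1 <= w <= q)%N by rewrite /w; lia.
have haq : 0 <= a q by rewrite /a; apply: mulr_ge0; apply: ltW; [apply: hf|apply: hp]; lia.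
have Hz := divn_eq z 2. rewrite modn2 in Hz.
have ew : w = (z %/ 2).+1 by []. clearbody w.
move: Hz ew; move Ek: (z %/ 2)%N => k Hz ew.
have mq : (w + (q - w) = q)%N by lia.
have fin : forall c d : nat, (forall m, c + d * m <= (w + m) ^ 2)%N ->
    c%:R * a w + d%:R * \sum_(w.+1 <= j < q.+1) a j <= 1.
  move=> c d H.
  have := @lemB R q w c d a hm hw H (q - w)%N ltac:(lia).
  rewrite mq => hB.
  have : 0 <= ((q ^ 2 - (c + d * (q - w)))%:R) * a q by apply: mulr_ge0.
  have eq : a (w + (q - w)%N) = a q by congr a; lia.
  rewrite eq in hB.
  move: hA hB; rewrite /a /=; lra.
split => hodd.
- rewrite (negbTE hodd) addn0 in Hz.
  have e1 : (3 * z + 2)%:R / 2 = (3 * k + 1)%:R :> R.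
    rewrite (_ : (3 * z + 2 = (3 * k + 1) * 2)%N); last by lia.
    by rewrite natrM mulfK // pnatr_eq0.
  rewrite e1 (_ : (2 * z + 1 = 4 * k + 1)%N); last by lia.
  apply: (fin (3 * k + 1)%N (4 * k + 1)%N) => m.
  rewrite ew.
  case: (leqP m k) => h.
  - have [t ->] : exists t, k = (m + t)%N by exists (k - m)%N; lia. nia.
  - have [t ->] : exists t, m = (k + 1 + t)%N by exists (m - k - 1)%N; lia. nia.
- rewrite hodd in Hz.
  have e1 : (z + 1)%:R / 2 = (k + 1)%:R :> R.
    rewrite (_ : (z + 1 = (k + 1) * 2)%N); last by lia.
    by rewrite natrM mulfK // pnatr_eq0.
  rewrite e1 (_ : (2 * z + 1 = 4 * k + 3)%N); last by lia.
  apply: (fin (k + 1)%N (4 * k + 3)%N) => m.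
  rewrite ew.
  case: (leqP m k) => h.
  - have [t ->] : exists t, k = (m + t)%N by exists (k - m)%N; lia. nia.
  - have [t ->] : exists t, m = (k + 1 + t)%N by exists (m - k - 1)%N; lia. nia.
Qed.
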